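(* Let $n=2k$ and let $P\in\mathbb{H}_n$ be a rank-$k$ orthogonal projection. Then $S^{\mathbb{H}}(P)\cup(-S^{\mathbb{H}}(P))$ contains no two-dimensional real linear subspace of $\mathbb{H}_n$.
   Context: $\mathbb{H}_n$ is the real space of $n\times n$ Hermitian matrices. $w_k(A)=\max\{|\operatorname{tr}(AP)|: P=P^*=P^2,\operatorname{tr}P=k\}$. For a rank-$k$ orthogonal projection $P$, $S^{\mathbb{H}}(P)=\{B\in\mathbb{H}_n:\operatorname{tr}(BP)=w_k(B)\}$. *)

(* Defs.v *)
From HB Require Import structures.
From mathcomp Require Import all_boot all_order all_algebra.
From mathcomp Require Import complex.
From mathcomp Require Import classical_sets reals.
Set Implicit Arguments. Unset Strict Implicit. Unset Printing Implicit Defensive.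
Import Order.TTheory GRing.Theory Num.Theory.
Local Open Scope ring_scope.
Local Open Scope classical_set_scope.

Definition is_hermitian (R : realType) (n : nat) (A : 'M[R[i]]_n) : Prop :=
  map_mx (@conjc R) A^T = A.

Definition is_rank_proj (R : realType) (n k : nat) (P : 'M[R[i]]_n) : Prop :=
  [/\ is_hermitian P, P *m P = P & \tr P = k%:R].

(* w_k(A) = max { |tr(AP)| : P = P^* = P^2, tr P = k }  (taken as a supremum
   of real numbers; complex.Re `|z| is the real modulus of z) *)
Definition wk (R : realType) (n k : nat) (A : 'M[R[i]]_n) : R :=
  sup [set complex.Re `|\tr (A *m Q)| | Q in [set Q | is_rank_proj k Q]].

Definition SH (R : realType) (n k : nat) (P : 'M[R[i]]_n) : set 'M[R[i]]_n :=
  [set B | is_hermitian B /\ \tr (B *m P) = ((wk k B)%:C)%C].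

Definition rC (R : realType) (a : R) : R[i] := (a%:C)%C.

(* Main.v *)
Require Import Defs.
From HB Require Import structures.
From mathcomp Require Import all_boot all_order all_algebra.
From mathcomp Require Import complex.
From mathcomp Require Import classical_sets reals.
From mathcomp Require Import ring zify.
Import Order.TTheory GRing.Theory Num.Theory.
Local Open Scope ring_scope.

Section Part1.
Local Open Scope classical_set_scope.

Lemma proj_entry_le1 (R : realType) n k (Q : 'M[R[i]]_n) :
  is_rank_proj k Q -> forall a b, `|Q a b| <= 1.
Proof.
case=> hH hI _ a b.
have hQ : forall x y, Q y x = conjc (Q x y).
  by move=> x y; rewrite -{1}hH !mxE.
have haa : Q a a = \sum_c `|Q a c| ^+ 2.
  by rewrite -{1}hI mxE; apply: eq_bigr => c _; rewrite sqr_normc -hQ.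
have h0 : 0 <= Q a a.
  by rewrite haa sumr_ge0 // => c _; rewrite exprn_ge0 ?normr_ge0.
have hle : forall c, `|Q a c| ^+ 2 <= Q a a.
  move=> c; rewrite haa (bigD1 c) //= lerDl sumr_ge0 // => ? _.
  by rewrite exprn_ge0 ?normr_ge0.
have h1 : Q a a <= 1.
  have := hle a; rewrite ger0_norm // => h.
  case: (eqVneq (Q a a) 0) => [->|nz]; first by rewrite ler01.
  have pos : 0 < Q a a by rewrite lt_def nz h0.
  by rewrite -(ler_pM2l pos) mulr1 -expr2.
have := le_trans (hle b) h1.
by rewrite -[X in _ <= X -> _](expr1n _ 2) ler_pXn2r // ?nnegrE ?normr_ge0 ?ler01.
Qed.

Lemma tr_bound (R : realType) n k (C Q : 'M[R[i]]_n) : is_rank_proj k Q ->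
  `|\tr (C *m Q)| <= \sum_a \sum_b `|C a b|.
Proof.
move=> hQ; rewrite /mxtrace.
apply: (le_trans (ler_norm_sum _ _ _)); apply: ler_sum => a _.
rewrite mxE; apply: (le_trans (ler_norm_sum _ _ _)); apply: ler_sum => b _.
rewrite normrM -{2}(mulr1 `|C a b|); apply: ler_wpM2l => //.
exact: proj_entry_le1 hQ _ _.
Qed.

Lemma wk0 (R : realType) n k (C : 'M[R[i]]_n) : wk k C = 0 ->
  forall Q, is_rank_proj k Q -> \tr (C *m Q) = 0.
Proof.
move=> hw Q hQ.
have hub : has_ubound [set complex.Re `|\tr (C *m Q')| | Q' in [set Q' | is_rank_proj k Q']].
  exists (complex.Re (\sum_a \sum_b `|C a b|)) => _ [Q' hQ' <-].
  by have := @tr_bound R n k C Q' hQ'; rewrite lecE => /andP[_ ->].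
have := ub_le_sup hub.
rewrite -/(wk k C) hw => hle.
apply/eqP; rewrite -normr_le0 lecE /=.
rewrite eqxx /=.
by apply: hle; exists Q.
Qed.


End Part1.


Definition ct {R : realType} {m n} (M : 'M[R[i]]_(m, n)) : 'M[R[i]]_(n, m) :=
  map_mx (@conjc R) M^T.

Lemma ctM (R : realType) m n p (A : 'M[R[i]]_(m, n)) (B : 'M[R[i]]_(n, p)) :
  ct (A *m B) = ct B *m ct A.
Proof. by rewrite /ct trmx_mul map_mxM. Qed.

Lemma ct0 (R : realType) m n : ct (0 : 'M[R[i]]_(m, n)) = 0.
Proof. by apply/matrixP => a b; rewrite !mxE rmorph0. Qed.

Lemma ctD (R : realType) m n (A B : 'M[R[i]]_(m, n)) : ct (A + B) = ct A + ct B.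
Proof. by apply/matrixP => a b; rewrite !mxE rmorphD. Qed.

Lemma ctZ (R : realType) m n (t : R[i]) (A : 'M[R[i]]_(m, n)) : ct (t *: A) = conjc t *: ct A.
Proof. by apply/matrixP => a b; rewrite !mxE rmorphM. Qed.

Lemma ctK (R : realType) m n (A : 'M[R[i]]_(m, n)) : ct (ct A) = A.
Proof. by apply/matrixP => a b; rewrite !mxE conjcK. Qed.

Lemma conj_rC (R : realType) (r : R) : conjc (rC r) = rC r.
Proof. by rewrite /rC /= oppr0. Qed.

Definition DS (R : realType) {n} (S : {set 'I_n}) : 'M[R[i]]_n :=
  diag_mx (\row_i ((i \in S)%:R)).

Lemma DS_herm (R : realType) n (S : {set 'I_n}) : is_hermitian (DS R S).
Proof.
apply/matrixP => a b; rewrite !mxE.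
case: (eqVneq a b) => [<-|ne].
  by rewrite !mulr1n rmorph_nat.
by rewrite !mulr0n rmorph0.
Qed.

Lemma DS_idem (R : realType) n (S : {set 'I_n}) : DS R S *m DS R S = DS R S.
Proof.
rewrite /DS mulmx_diag; congr diag_mx; apply/rowP => i; rewrite !mxE.
by case: (i \in S); rewrite ?mulr1 ?mulr0.
Qed.

Lemma DS_tr (R : realType) n (S : {set 'I_n}) : \tr (DS R S) = #|S|%:R.
Proof.
rewrite mxtrace_diag -sumr_const [RHS]big_mkcond /=; apply: eq_bigr => i _.
by rewrite mxE; case: ifP.
Qed.

Lemma DS_tr_mul (R : realType) n (S : {set 'I_n}) (C : 'M[R[i]]_n) :
  \tr (C *m DS R S) = \sum_(s in S) C s s.
Proof.
rewrite mul_mx_diag /mxtrace [RHS]big_mkcond; apply: eq_bigr => i _.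
by rewrite !mxE; case: (i \in S); rewrite ?mulr1 ?mulr0.
Qed.

Lemma DS_vec (R : realType) n (S : {set 'I_n}) (x : 'cV[R[i]]_n) :
  (forall a, a \in S -> x a 0 = 0) -> DS R S *m x = 0.
Proof.
move=> hx; rewrite mul_diag_mx; apply/matrixP => a b; rewrite !mxE (ord1 b).
case h: (a \in S); first by rewrite hx ?h // mulr0.
by rewrite mul0r.
Qed.

Definition QQ {R : realType} {n} (S : {set 'I_n}) (x : 'cV[R[i]]_n) (c : R) :=
  DS R S + rC (c^-1) *: (x *m ct x).

Lemma QQ_proj (R : realType) n k (S : {set 'I_n}) (x : 'cV[R[i]]_n) (c : R) :
  0 < c -> ct x *m x = (rC c)%:M -> (forall a, a \in S -> x a 0 = 0) ->
  #|S|.+1 = k -> is_rank_proj k (QQ S x c).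
Proof.
move=> c0 hxx hsup hk; have cn0 : c != 0 by rewrite gt_eqF.
have hDx := @DS_vec R n S x hsup.
split.
- rewrite /is_hermitian -/(ct (QQ S x c)) /QQ ctD ctZ ctM ctK conj_rC.
  by rewrite (@DS_herm R _ S : ct (DS R S) = DS R S).
- have hxD : ct x *m DS R S = 0.
    by rewrite -[DS R S in LHS](@DS_herm R _ S) -/(ct (DS R S)) -ctM hDx ct0.
  rewrite /QQ; set X := x *m ct x.
  have hDX : DS R S *m X = 0 by rewrite /X mulmxA hDx mul0mx.
  have hXD : X *m DS R S = 0 by rewrite /X -mulmxA hxD mulmx0.
  have hXX : X *m X = rC c *: X.
    by rewrite /X mulmxA -[x *m ct x *m x]mulmxA hxx mul_mx_scalar -scalemxAl.
  rewrite mulmxDl !mulmxDr DS_idem -!scalemxAr -!scalemxAl hDX hXD hXX.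
  rewrite !scaler0 addr0 add0r !scalerA.
  congr (_ + _ *: _); rewrite /rC -!rmorphM; congr (_ %:C)%C.
  by rewrite -mulrA mulVf // mulr1.
- rewrite mxtraceD mxtraceZ DS_tr mxtrace_mulC hxx mxtrace_scalar.
  by rewrite /rC -rmorphM mulVf // -hk mulrSr.
Qed.

Lemma trQQ (R : realType) n (S : {set 'I_n}) (x : 'cV[R[i]]_n) (c : R) C :
  \tr (C *m QQ S x c) = \tr (C *m DS R S) + rC (c^-1) * (ct x *m C *m x) 0 0.
Proof.
rewrite /QQ mulmxDr mxtraceD -scalemxAr mxtraceZ; congr (_ + _ * _).
rewrite (mulmxA C x (ct x)) mxtrace_mulC mulmxA.
by rewrite trace_mx11.
Qed.

Definition vx {R : realType} {n} (i j : 'I_n) (u : R[i]) : 'cV[R[i]]_n :=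
  delta_mx i 0 + u *: delta_mx j 0.

Lemma ct_vx (R : realType) n (i j : 'I_n) (u : R[i]) :
  ct (vx i j u) = delta_mx 0 i + conjc u *: delta_mx 0 j.
Proof.
apply/matrixP => a b; rewrite !mxE (ord1 a) !eqxx /= !andbT.
by rewrite rmorphD rmorphM !rmorph_nat.
Qed.

Lemma vx_norm (R : realType) n (i j : 'I_n) (u : R[i]) : i != j ->
  ct (vx i j u) *m vx i j u = (1 + conjc u * u)%:M.
Proof.
move=> ne; rewrite ct_vx /vx mulmxDl !mulmxDr -!scalemxAl -!scalemxAr.
rewrite !mul_delta_mx_cond eqxx (negbTE ne) eq_sym (negbTE ne).
apply/matrixP => a b; rewrite !mxE (ord1 a) (ord1 b) /=.
by rewrite eqxx !mxE !mulr0 !addr0 !mulr1n mulr1 add0r.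
Qed.

Lemma vx_form (R : realType) n (i j : 'I_n) (u : R[i]) (C : 'M[R[i]]_n) :
  (ct (vx i j u) *m C *m vx i j u) 0 0 =
  C i i + u * C i j + conjc u * C j i + conjc u * u * C j j.
Proof.
rewrite ct_vx /vx mulmxDl -scalemxAl -!rowE !mulmxDr -!scalemxAr -!colE.
rewrite !mxE; ring.
Qed.


Lemma conj_i (R : realType) : conjc ('i%C : R[i]) = - 'i%C.
Proof. by apply/eqP; rewrite eq_complex /= oppr0 !eqxx. Qed.

Lemma pair_facts (R : realType) n k (C : 'M[R[i]]_n)
  (hC : forall Q, is_rank_proj k Q -> \tr (C *m Q) = 0)
  (S : {set 'I_n}) (i j : 'I_n) :
  i != j -> i \notin S -> j \notin S -> #|S|.+1 = k ->
  C i j = 0 /\ C i i + \tr (C *m DS R S) = 0.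
Proof.
move=> ne hi hj hk.
set t := \tr (C *m DS R S).
have key : forall (u : R[i]) (c : R), 0 < c -> 1 + conjc u * u = rC c ->
    t + rC (c^-1) * (C i i + u * C i j + conjc u * C j i + conjc u * u * C j j) = 0.
  move=> u c c0 hc; rewrite -vx_form -trQQ; apply: hC; apply: QQ_proj => //.
    by rewrite vx_norm // hc.
  move=> a ha; rewrite !mxE.
  have -> : (a == i) = false by apply: contraNF hi => /eqP <-.
  have -> : (a == j) = false by apply: contraNF hj => /eqP <-.
  by rewrite /= !mulr0n mulr0 addr0.
have r1 : rC (1 : R) = 1 by rewrite /rC rmorph1.
have r2 : rC (2 : R) = 2 by rewrite /rC rmorph_nat.
have e0 := key 0 1 ltr01 (ltac:(by rewrite rmorph0 mul0r addr0 r1)).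
rewrite rmorph0 !mul0r !addr0 invr1 r1 mul1r in e0.
have h2 : (0 : R) < 2 by [].
have s0 : rC (2^-1 : R) != 0.
  by rewrite /rC; apply/eqP => /(congr1 (@complex.Re R)) /= /eqP; rewrite invr_eq0 pnatr_eq0.
pose I : R[i] := 'i%C.
have cI : conjc I = - I by apply/eqP; rewrite eq_complex /= oppr0 !eqxx.
have ii : I * I = -1 by rewrite -expr2 sqr_i.
have ep1 := key 1 2 h2 (ltac:(by rewrite rmorph1 mul1r r2)).
have em1 := key (-1) 2 h2 (ltac:(by rewrite rmorphN1 mulrNN mul1r r2)).
have ei := key I 2 h2 (ltac:(by rewrite cI mulNr ii opprK r2)).
have cmI : conjc (- I) = I by apply/eqP; rewrite eq_complex /= oppr0 opprK !eqxx.
have emi := key (- I) 2 h2 (ltac:(by rewrite cmI mulrN ii opprK r2)).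
rewrite rmorph1 in ep1.
rewrite rmorphN1 in em1.
rewrite cI in ei.
rewrite cmI in emi.
split; last by rewrite addrC.
set s := rC (2^-1 : R) in s0 ep1 em1 ei emi.
have d1 : s * (2 * C i j + 2 * C j i) = 0.
  by rewrite -(subrr (0 : R[i])) -{1}ep1 -em1; ring.
have d2 : s * (I * (2 * C i j - 2 * C j i)) = 0.
  by rewrite -(subrr (0 : R[i])) -{1}ei -emi; ring.
move/eqP: d1; rewrite mulf_eq0 (negbTE s0) /= -mulrDr mulf_eq0 pnatr_eq0 /= => /eqP a1.
move/eqP: d2; rewrite mulf_eq0 (negbTE s0) /= mulf_eq0 => /orP[/eqP I0|].
  by move: I0; rewrite /I => /eqP; rewrite eq_complex /= oner_eq0 andbF.
rewrite -mulrBr mulf_eq0 pnatr_eq0 /= subr_eq0 => /eqP a2.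
move/eqP: a1; rewrite a2 -mulr2n mulrn_eq0 /= => /eqP.
by [].
Qed.


Lemma exS n k (i j : 'I_n) : n = (2 * k)%N -> (0 < k)%N ->
  exists S : {set 'I_n}, [/\ #|S|.+1 = k, i \notin S & j \notin S].
Proof.
move=> hn k0.
set s := take k.-1 (enum (~: [set i; j])).
exists [set x in s].
have hsz : (k.-1 <= size (enum (~: [set i; j])))%N.
  rewrite -cardE.
  have := cardsC [set i; j]; rewrite card_ord cards2.
  by case: (i != j) => /=; lia.
split.
- rewrite cardsE; move/card_uniqP: (take_uniq k.-1 (enum_uniq (mem (~: [set i; j])))).
  rewrite -/s => ->; rewrite size_takel //; lia.
- rewrite inE; apply/negP => /mem_take; rewrite mem_enum !inE.
  by rewrite eqxx.
- rewrite inE; apply/negP => /mem_take; rewrite mem_enum !inE.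
  by rewrite eqxx orbT.
Qed.

Lemma zero_of_traces (R : realType) k (C : 'M[R[i]]_(2 * k))
  (hC : forall Q, is_rank_proj k Q -> \tr (C *m Q) = 0) : C = 0.
Proof.
case: k C hC => [|k] C hC.
  apply/matrixP => a; case: a => a ha; exfalso; by rewrite muln0 in ha.
have hn : (2 * k.+1 = 2 * k.+1)%N by [].
have offd : forall a b : 'I_(2 * k.+1), a != b -> C a b = 0.
  move=> a b nab; have [S [hS ha hb]] := @exS _ k.+1 a b hn (ltn0Sn k).
  exact: (@pair_facts R _ k.+1 C hC S a b nab ha hb hS).1.
have diag : forall a b : 'I_(2 * k.+1), a != b -> C a a = C b b.
  move=> a b nab; have [S [hS ha hb]] := @exS _ k.+1 a b hn (ltn0Sn k).
  have [_ e1] := @pair_facts R _ k.+1 C hC S a b nab ha hb hS.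
  have [_ e2] := @pair_facts R _ k.+1 C hC S b a (ltac:(by rewrite eq_sym)) hb ha hS.
  by apply: (addIr (\tr (C *m DS R S))); rewrite e1 e2.
apply/matrixP => a b; rewrite mxE.
case: (eqVneq a b) => [<-|nab]; last exact: offd.
have p0 : (0 < 2 * k.+1)%N by lia.
have p1 : (1 < 2 * k.+1)%N by lia.
pose o0 : 'I_(2 * k.+1) := Ordinal p0.
pose o1 : 'I_(2 * k.+1) := Ordinal p1.
pose j := if a == o0 then o1 else o0.
have nj : a != j.
  rewrite /j; case: (eqVneq a o0) => [->|//].
  by apply/eqP => /(congr1 val).
have [S [hS ha hb]] := @exS _ k.+1 a j hn (ltn0Sn k).
have [_ e1] := @pair_facts R _ k.+1 C hC S a j nj ha hb hS.
rewrite DS_tr_mul in e1.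
have : \sum_(s in S) C s s = C a a *+ #|S|.
  rewrite -sumr_const; apply: eq_bigr => s hs; symmetry; apply: diag.
  by apply: contraNneq ha => ->.
move=> hsum; rewrite hsum -mulrS hS in e1.
by move/eqP: e1; rewrite mulrn_eq0 /= => /eqP.
Qed.

Local Open Scope classical_set_scope.

Theorem mainTheorem17 (R : realType) (k n : nat) (hn : n = (2 * k)%N)
  (P : 'M[R[i]]_n) (hP : is_rank_proj k P) :
  ~ (exists A B : 'M[R[i]]_n,
        [/\ is_hermitian A, is_hermitian B,
            (forall a b : R, rC a *: A + rC b *: B = 0 -> a = 0 /\ b = 0) &
            (forall a b : R,
               SH k P (rC a *: A + rC b *: B) \/
               SH k P (- (rC a *: A + rC b *: B)))]).
Proof.
move=> [A [B [hA hB hind hS]]].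
subst n.
have trN : forall D : 'M[R[i]]_(2 * k), \tr (- D *m P) = - \tr (D *m P).
  by move=> D; rewrite mulNmx linearN.
have realtr : forall D, SH k P D \/ SH k P (- D) -> exists r : R, \tr (D *m P) = rC r.
  move=> D [[_ h]|[_ h]]; first by exists (wk k D).
  exists (- wk k (- D)); rewrite -[LHS]opprK -trN h /rC.
  by apply/eqP; rewrite eq_complex /= oppr0 !eqxx.
have zer : forall D, SH k P D \/ SH k P (- D) -> \tr (D *m P) = 0 -> D = 0.
  move=> D [[_ h]|[_ h]] h0; apply: zero_of_traces => Q hQ.
    have w0 : wk k D = 0 by move: h; rewrite h0 => /(congr1 (@complex.Re R)) /=.
    exact: (@wk0 R _ k D w0 Q hQ).
  have w0 : wk k (- D) = 0.
    by move: h; rewrite trN h0 oppr0 => /(congr1 (@complex.Re R)) /=.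
  have := @wk0 R _ k (- D) w0 Q hQ; rewrite mulNmx linearN => /eqP; rewrite oppr_eq0 => /eqP //.
have e10 : rC 1 *: A + rC 0 *: B = A.
  by rewrite /rC rmorph1 rmorph0 scale1r scale0r addr0.
have e01 : rC 0 *: A + rC 1 *: B = B.
  by rewrite /rC rmorph1 rmorph0 scale1r scale0r add0r.
have hSA := hS 1 0; rewrite e10 in hSA.
have hSB := hS 0 1; rewrite e01 in hSB.
have [ra hra] := realtr A hSA.
have [rb hrb] := realtr B hSB.
case: (boolP ((ra == 0) && (rb == 0))) => [/andP[/eqP ra0 _]|hne].
  have A0 : A = 0.
    by apply: (zer A hSA); rewrite hra ra0 /rC rmorph0.
  have [] := hind 1 0; first by rewrite e10.
  by move=> /eqP; rewrite oner_eq0.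
set D := rC rb *: A + rC (- ra) *: B.
have D0 : D = 0.
  apply: zer (hS rb (- ra)) _.
  rewrite /D mulmxDl mxtraceD -!scalemxAl !mxtraceZ hra hrb /rC -!rmorphM -rmorphD.
  by rewrite mulNr mulrC subrr rmorph0.
have [hb ha] := hind rb (- ra) D0.
move: hne; rewrite hb -oppr_eq0 ha !eqxx.
by [].
Qed.
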